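(* Let $X_1,X_2,\dots$ be i.i.d. $\mathcal{N}(\mu_1,1)$ with $\mu_1\neq0$, let $f_0$ and $f_1$ be the densities of $\mathcal{N}(0,1)$ and $\mathcal{N}(\mu_1,1)$, and for $t\ge0$ let $$\hat\nu_t^{\mathrm{CUSUM}}=\arg\max_{0\le k\le t}\sum_{i=k+1}^t\log\frac{f_1(X_i)}{f_0(X_i)}.$$ Then $$\mathbb{E}\Big[\sup_{t\ge0}\hat\nu_t^{\mathrm{CUSUM}}\Big]\le\sum_{n=1}^\infty n\exp\left(-\frac{n\mu_1^2}{8}\right).$$
   Context: This is the single-stream setting with change-point at time $0$: every observation is drawn from the post-change distribution $\mathcal{N}(\mu_1,1)$. An empty sum equals $0$. *)

(* Defs.v *)
From HB Require Import structures.
From mathcomp Require Import all_boot all_order all_algebra.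
From mathcomp Require Import all_classical all_reals all_analysis.
Set Implicit Arguments. Unset Strict Implicit. Unset Printing Implicit Defensive.
Import Order.TTheory GRing.Theory Num.Theory.
Local Open Scope classical_set_scope.
Local Open Scope ring_scope.

Section defs.
Context {R : realType} {d : measure_display} {T : measurableType d}.

Definition mutually_independent (P : probability T R) (X : nat -> T -> R) :=
  forall (s : seq nat) (B : nat -> set R), uniq s ->
    (forall i, measurable (B i)) ->
    P (\big[setI/setT]_(i <- s) (X i @^-1` B i)) =
    (\prod_(i <- s) P (X i @^-1` B i))%E.

Definition has_normal_law (P : probability T R) (m : R) (Y : T -> R) :=
  forall A : set R, measurable A -> P (Y @^-1` A) = normal_prob m 1 A.

Definition llr (mu1 x : R) : R := ln (normal_pdf mu1 1 x / normal_pdf 0 1 x).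

(* Observations X_1, X_2, ... are represented by X 0, X 1, ...;
   so sum_{i=k+1}^t g(X_i) is \sum_(k <= i < t) g (X i). *)
Definition cusum_stat (mu1 : R) (X : nat -> T -> R) (k t : nat) (w : T) : R :=
  \sum_(k <= i < t) llr mu1 (X i w).

(* CUSUM change-point estimate: argmax over 0 <= k <= t; ties broken by taking
   the largest maximizer (ties have probability zero). *)
Definition nu_cusum (mu1 : R) (X : nat -> T -> R) (t : nat) (w : T) : nat :=
  (\max_(k < t.+1 | [forall j : 'I_t.+1,
        (cusum_stat mu1 X j t w <= cusum_stat mu1 X k t w)%R]) (k : nat))%N.

End defs.

(* Main.v *)
Require Import Defs.
From HB Require Import structures.
From mathcomp Require Import all_boot all_order all_algebra.
From mathcomp Require Import all_classical all_reals all_analysis.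
From mathcomp Require Import ring lra measurable_realfun.
Import Order.TTheory GRing.Theory Num.Theory numFieldNormedType.Exports.
Local Open Scope classical_set_scope.
Local Open Scope ring_scope.


Section factor.
Context {R : realType} {d : measure_display} {T : measurableType d}.
Variables (P : probability T R) (X : nat -> T -> R).
Hypothesis mX : forall i, measurable_fun setT (X i).
Hypothesis indep : mutually_independent P X.
Variables (hf : R -> R) (r : nat) (c : nat -> R) (D : nat -> set R).
Hypotheses (c0 : forall j, 0 <= c j) (mD : forall j, measurable (D j)).
Hypothesis hE : forall x, hf x = \sum_(j < r) c j * \1_(D j) x.

Definition pr (A : set T) : R := fine (P A).

Lemma prE A : measurable A -> P A = (pr A)%:E.
Proof. by move=> mA; rewrite fineK // fin_num_measure. Qed.

Lemma mpre i Y : measurable Y -> measurable (X i @^-1` Y).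
Proof. by move=> mY; rewrite -[X i @^-1` Y]setTI; exact: mX. Qed.

Lemma hf_ge0 x : 0 <= hf x.
Proof.
by rewrite hE; apply: sumr_ge0 => j _; apply: mulr_ge0.
Qed.

Lemma mhf : measurable_fun setT hf.
Proof.
have -> : hf = (fun x => \sum_(j < r) c j * \1_(D j) x).
  by apply/funext => x; rewrite hE.
by apply: measurable_sum => j; apply: measurable_funM.

Qed.

Definition ee i := \sum_(j < r) c j * pr (X i @^-1` D j).

Lemma factor (s t : seq nat) (B : nat -> set R) : uniq (t ++ s) ->
  (forall i, measurable (B i)) ->
  (\int[P]_w ((\1_(\big[setI/setT]_(i <- t) (X i @^-1` B i)) w)
               * \prod_(i <- s) hf (X i w))%:E
  = ((\prod_(i <- t) pr (X i @^-1` B i)) * \prod_(i <- s) ee i)%:E)%E.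
Proof.
elim: s t B => [|a s IH] t B.
  rewrite cats0 => ut mB.
  under eq_integral do rewrite big_nil mulr1.
  rewrite big_nil mulr1 integral_indic //; last first.
    by apply: bigsetI_measurable => i _; exact: mpre.
  rewrite setIT; apply: eq_trans (indep t B ut mB) _.
  rewrite -prodEFin; apply: eq_bigr => i _; apply: prE; exact: mpre.
move=> u mB.
have aNt : a \notin t.
  apply/negP => at_; move: u; rewrite cat_uniq => /and3P[_ /hasPn H _].
  by move: (H a (mem_head _ _)); rewrite /= at_.
have u' : uniq ((a :: t) ++ s).
  have p : perm_eq (t ++ a :: s) (a :: t ++ s).
    by rewrite -[a :: s]cat1s perm_catCA.
  by rewrite cat_cons -(perm_uniq p).
pose B' j := fun i => if i == a then D j else B i.
have mB' j i : measurable (B' j i) by rewrite /B'; case: ifP.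
have tB j : forall i, i \in t -> B' j i = B i.
  move=> i it; rewrite /B'; case: eqP => // ia.
  by move: aNt; rewrite -ia it.
have A'E j : \big[setI/setT]_(i <- a :: t) X i @^-1` B' j i =
    X a @^-1` D j `&` \big[setI/setT]_(i <- t) X i @^-1` B i.
  rewrite big_cons /B' eqxx; congr (_ `&` _); apply: eq_big_seq => i it.
  by rewrite -/(B' j i) tB.
have PT' j : \prod_(i <- t) pr (X i @^-1` B' j i) = \prod_(i <- t) pr (X i @^-1` B i).
  by apply: eq_big_seq => i it; rewrite tB.
have mG j : measurable_fun setT (fun w => \1_(\big[setI/setT]_(i <- a :: t) X i @^-1` B' j i) w
      * \prod_(i <- s) hf (X i w)).
  apply: measurable_funM.
    apply: measurable_indic; apply: bigsetI_measurable => i _; exact: mpre.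
  apply: measurable_prod => i _; exact: measurableT_comp mhf (mX i).
transitivity (\int[P]_w (\sum_(j < r) (c j * (\1_(\big[setI/setT]_(i <- a :: t) X i @^-1` B' j i) w
      * \prod_(i <- s) hf (X i w)))%:E))%E.
  apply: eq_integral => w _; rewrite sumEFin; congr EFin.
  rewrite big_cons hE mulr_suml mulr_sumr; apply: eq_bigr => j _.
  rewrite A'E indicI /=.
  have -> : \1_(X a @^-1` D j) w = \1_(D j) (X a w) :> R by rewrite !indicE.
  ring.
rewrite ge0_integral_sum //; last first.
- move=> j w _; rewrite lee_fin; apply: mulr_ge0 => //; apply: mulr_ge0 => //.
  by apply: prodr_ge0 => i _; exact: hf_ge0.
- move=> j; apply/measurable_EFinP; apply: measurable_funM => //.
transitivity (\sum_(j < r) ((c j)%:E *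
   ((\prod_(i <- a :: t) pr (X i @^-1` B' j i)) * \prod_(i <- s) ee i)%:E))%E.
  apply: eq_bigr => j _.
  under eq_integral do rewrite EFinM.
  rewrite ge0_integralZl_EFin //; last first.
    by apply/measurable_EFinP; exact: mG.
    move=> w _; rewrite lee_fin; apply: mulr_ge0 => //.
    by apply: prodr_ge0 => i _; exact: hf_ge0.
  by rewrite IH.
rewrite sumEFin; congr EFin.
rewrite [in RHS]big_cons /ee mulr_suml mulr_sumr; apply: eq_bigr => j _.
rewrite big_cons /B' eqxx -/(B' j) PT'.
ring.
Qed.
Lemma factor0 (s : seq nat) : uniq s ->
  (\int[P]_w (\prod_(i <- s) hf (X i w))%:E = (\prod_(i <- s) ee i)%:E)%E.
Proof.
move=> us; have := @factor s [::] (fun _ => setT) us (fun _ => measurableT).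
rewrite !big_nil mul1r => <-; apply: eq_integral => w _.
by rewrite indicE mem_set // mul1r.
Qed.
End factor.



Section gauss.
Context {R : realType}.
Variable mu : R.

Definition gg (x : R) : R := expR (- (mu * x - mu ^+ 2 / 2) / 2).

Lemma gg_pdf x : gg x * normal_pdf mu 1 x =
  expR (- mu ^+ 2 / 8) * normal_pdf (mu / 2) 1 x.
Proof.
rewrite !normal_pdfE ?oner_neq0 // /normal_fun /gg expr1n.
rewrite mulrCA -expRD [RHS]mulrCA -expRD; congr (_ * expR _).
rewrite -[_ *+ 2]/(1 + 1 : R).
by field.
Qed.

Lemma mgg : measurable_fun setT gg.
Proof.
apply: measurableT_comp; first exact: measurable_expR.
apply: measurable_funM => //; apply: measurable_funN.
by apply: measurable_funB => //; apply: measurable_funM.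
Qed.

Lemma int_gg : (\int[lebesgue_measure]_x (gg x * normal_pdf mu 1 x)%:E
  = (expR (- mu ^+ 2 / 8))%:E)%E.
Proof.
under eq_integral do rewrite gg_pdf EFinM.
rewrite ge0_integralZl_EFin //= ?integral_normal_pdf ?mule1 //.
- by move=> x _; rewrite lee_fin normal_pdf_ge0.
- by apply/measurable_EFinP; exact: measurable_normal_pdf.

Qed.
End gauss.

Section bound.
Context {R : realType} {d : measure_display} {T : measurableType d}.
Variables (P : probability T R) (X : nat -> T -> R) (mu : R).
Hypothesis mX : forall i, measurable_fun setT (X i).
Hypothesis indep : mutually_independent P X.
Hypothesis law : forall i, has_normal_law P mu (X i).

Lemma simple_bound (hf : R -> R) (r : nat) (c : nat -> R) (D : nat -> set R) :
  (forall j, 0 <= c j) -> (forall j, measurable (D j)) ->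
  (forall x, hf x = \sum_(j < r) c j * \1_(D j) x) ->
  (forall x, hf x <= gg mu x) ->
  forall i, ee P X r c D i <= expR (- mu ^+ 2 / 8).
Proof.
move=> c0 mD hE hg i; rewrite -lee_fin -(int_gg mu).
have mhf : measurable_fun setT hf.
  have -> : hf = (fun x => \sum_(j < r) c j * \1_(D j) x).
    by apply/funext => x; rewrite hE.
  by apply: measurable_sum => j; apply: measurable_funM.
have hf0 x : 0 <= hf x.
  by rewrite hE; apply: sumr_ge0 => j _; apply: mulr_ge0.
have -> : (ee P X r c D i)%:E =
    (\int[lebesgue_measure]_x (hf x * normal_pdf mu 1 x)%:E)%E.
  transitivity (\sum_(j < r) \int[lebesgue_measure]_x
      (c j * (\1_(D j) x * normal_pdf mu 1 x))%:E)%E.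
    rewrite /ee -sumEFin; apply: eq_bigr => j _.
    rewrite EFinM -prE; last by apply: mpre.
    have -> : P (X i @^-1` D j) = normal_prob mu 1 (D j) by apply: law.
    under [RHS]eq_integral do rewrite EFinM.
    rewrite ge0_integralZl_EFin //; last 2 first.
    - by move=> x _; rewrite lee_fin mulr_ge0 ?normal_pdf_ge0.
    - apply/measurable_EFinP; apply: measurable_funM.
        apply: measurable_indic; exact: mD.
      exact: measurable_normal_pdf.
    congr (_ * _)%E; rewrite /normal_prob [LHS]integral_mkcond.
    apply: eq_integral => x _; rewrite /patch indicE.
    by case: (x \in D j); rewrite ?mul1r ?mul0r.
  rewrite -ge0_integral_sum //; last 2 first.
  - move=> j; apply/measurable_EFinP; apply: measurable_funM => //.
    apply: measurable_funM; first by apply: measurable_indic; exact: mD.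
    exact: measurable_normal_pdf.
  - by move=> j x _; rewrite lee_fin mulr_ge0 ?mulr_ge0 ?normal_pdf_ge0.
  apply: eq_integral => x _; rewrite sumEFin hE mulr_suml; congr EFin.
  by apply: eq_bigr => j _; rewrite mulrA.
apply: ge0_le_integral => //.
- by move=> x _; rewrite lee_fin mulr_ge0 ?normal_pdf_ge0.
- apply/measurable_EFinP; apply: measurable_funM => //.
  exact: measurable_normal_pdf.
- apply/measurable_EFinP; apply: measurable_funM; first exact: mgg.
  exact: measurable_normal_pdf.
- by move=> x _; rewrite lee_fin ler_wpM2r ?normal_pdf_ge0.
Qed.
End bound.


Lemma cvg_bigprod {R : realType} (s : seq nat) (u : nat -> nat -> R) (l : nat -> R) :
  (forall i, u m i @[m --> \oo] --> l i) ->
  \prod_(i <- s) u m i @[m --> \oo] --> \prod_(i <- s) l i.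
Proof.
move=> H; elim: s => [|a s IH].
  under eq_fun do rewrite big_nil.
  by rewrite big_nil; exact: cvg_cst.
under eq_fun do rewrite big_cons.
by rewrite big_cons; apply: cvgM => //; exact: H.
Qed.

Import HBNNSimple.
Section prodb.
Context {R : realType} {d : measure_display} {T : measurableType d}.
Variables (P : probability T R) (X : nat -> T -> R) (mu : R).
Hypothesis mX : forall i, measurable_fun setT (X i).
Hypothesis indep : mutually_independent P X.
Hypothesis law : forall i, has_normal_law P mu (X i).

Lemma prod_bound (n : nat) :
  (\int[P]_w (\prod_(0 <= i < n) gg mu (X i w))%:E
   <= (expR (- mu ^+ 2 / 8) ^+ n)%:E)%E.
Proof.
have mg : measurable_fun setT (EFin \o gg mu).
  by apply/measurable_EFinP; exact: mgg.
have g0 : forall x, setT x -> (0 <= (EFin \o gg mu) x)%E.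
  by move=> x _; rewrite lee_fin expR_ge0.
pose h := nnsfun_approx measurableT mg.
have h0 m x : 0 <= h m x by [].
have hnd x : {homo (fun m => h m x) : a b / (a <= b)%N >-> a <= b}.
  by move=> a b ab; exact/lefP/nd_nnsfun_approx.
have hcvg x : h m x @[m --> \oo] --> gg mu x.
  have := @cvg_nnsfun_approx _ _ _ _ measurableT _ mg g0 x Logic.I.
  by move/fine_cvgP => [_].
have hle m x : h m x <= gg mu x.
  have := nondecreasing_cvgn_le (hnd x) (cvgP _ (hcvg x)) m.
  by rewrite (cvg_lim _ (hcvg x)).
pose S m := finmap.enum_fset (fset_set (range (h m))).
pose c m j := Order.max (S m)`_j 0.
pose D m j := h m @^-1` [set (S m)`_j].
have c0 m j : 0 <= c m j by rewrite /c le_max lexx orbT.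
have mD m j : measurable (D m j).
  rewrite /D -[_ @^-1` _]setTI.
  by apply: (measurable_funPT (h m)) => //; exact: measurable_set1.
have hE m x : h m x = \sum_(j < size (S m)) c m j * \1_(D m j) x.
  rewrite [LHS]fimfunEord; apply: eq_bigr => j _.
  rewrite /c /D indicE.
  case: (boolP (x \in h m @^-1` [set (S m)`_j])) => [/set_mem /= hx|_].
    by rewrite -hx max_l.
  by rewrite !mulr0.
have bm m : (\int[P]_w (\prod_(0 <= i < n) h m (X i w))%:E
   <= (expR (- mu ^+ 2 / 8) ^+ n)%:E)%E.
  rewrite (@factor0 _ _ _ P X mX indep _ _ _ _ (c0 m) (mD m) (hE m)); last exact: iota_uniq.
  have -> : expR (- mu ^+ 2 / 8) ^+ n = \prod_(0 <= i < n) expR (- mu ^+ 2 / 8).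
    by rewrite prodr_const_nat subn0.
  rewrite lee_fin.
  apply: ler_prod => i _; apply/andP; split.
    by rewrite /ee; apply: sumr_ge0 => j _; apply: mulr_ge0 => //; apply: fine_ge0; exact: measure_ge0.
  exact: (simple_bound P X mu mX law _ _ _ _ (c0 m) (mD m) (hE m) (hle m)).
pose G m w := (\prod_(0 <= i < n) h m (X i w))%:E.
have mG m : measurable_fun setT (G m).
  apply/measurable_EFinP; apply: measurable_prod => i _.
  exact: measurableT_comp (measurable_funPT (h m)) (mX i).
have G0 m w : setT w -> (0 <= G m w)%E.
  by move=> _; rewrite lee_fin; apply: prodr_ge0 => i _.
have Gnd w : setT w -> {homo G^~ w : a b / (a <= b)%N >-> (a <= b)%E}.
  move=> _ a b ab; rewrite lee_fin; apply: ler_prod => i _.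
  by rewrite h0 /=; exact: hnd.
have Gcvg w : G^~ w @ \oo --> (\prod_(0 <= i < n) gg mu (X i w))%:E.
  apply: cvg_EFin; first exact: nearW.
  have HH := cvg_bigprod (index_iota 0 n) (fun m i => h m (X i w)) (fun i => gg mu (X i w)) (fun i => hcvg (X i w)).
  exact: HH.
have -> : (\int[P]_w (\prod_(0 <= i < n) gg mu (X i w))%:E =
    \int[P]_w limn (G^~ w))%E.
  by apply: eq_integral => w _; apply/esym/cvg_lim => //; exact: Gcvg.
have HC := cvg_monotone_convergence (mu := P) measurableT mG G0 Gnd.
rewrite -(cvg_lim _ HC) //; apply: lime_le; first exact: cvgP HC.
exact: nearW.
Qed.
End prodb.


Lemma llrE {R : realType} (mu x : R) : llr mu x = mu * x - mu ^+ 2 / 2.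
Proof.
rewrite /llr !normal_pdfE ?oner_neq0 // /normal_fun expr1n.
set eb := expR (- (x - 0) ^+ 2 / (1 *+ 2)).
have -> : expR (- (x - mu) ^+ 2 / (1 *+ 2)) = expR (mu * x - mu ^+ 2 / 2) * eb.
  rewrite /eb -expRD; congr expR; rewrite -[_ *+ 2]/(1 + 1 : R); by field.
rewrite mulrCA mulfK ?expRK //.
by rewrite mulf_neq0 // gt_eqF // ?expR_gt0 // normal_peak_gt0 // oner_neq0.
Qed.

Lemma le_integral_nn {R : realType} {d : measure_display} {T : measurableType d}
  (mu : {measure set T -> \bar R}) (f g : T -> \bar R) :
  (forall x, (0 <= f x)%E) -> (forall x, (f x <= g x)%E) ->
  (\int[mu]_x f x <= \int[mu]_x g x)%E.
Proof.
move=> f0 fg; rewrite !ge0_integralTE //; last by move=> x; exact: le_trans (f0 x) (fg x).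
apply: le_ereal_sup => _ /= [h Hh <-]; exists h => //= x.
exact: le_trans (Hh x) (fg x).
Qed.

Lemma nu_prop {R : realType} {d : measure_display} {T : measurableType d}
  (mu : R) (X : nat -> T -> R) (t : nat) (w : T) :
  nu_cusum mu X t w = 0%N \/
  (nu_cusum mu X t w <= t)%N /\ \sum_(0 <= i < nu_cusum mu X t w) llr mu (X i w) <= 0.
Proof.
rewrite /nu_cusum.
set Pk := (fun k : 'I_t.+1 => [forall j : 'I_t.+1, cusum_stat mu X j t w <= cusum_stat mu X k t w]).
case: (pickP Pk) => [k0 Pk0|P0]; last first.
  by left; rewrite big_pred0.
right; rewrite (bigop.bigmax_eq_arg k0) //.
case: (arg_maxnP (fun k : 'I_t.+1 => (k : nat)) Pk0) => k Hk _.
have kt : (k <= t)%N by rewrite -ltnS ltn_ord.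
split => //.
move/forallP: Hk => /(_ ord0) /=.
rewrite /cusum_stat (big_cat_nat (leq0n k) kt) /=.
by rewrite -[X in _ <= X]add0r lerD2r.
Qed.

Theorem lemma5 (R : realType) (d : measure_display) (T : measurableType d)
  (P : probability T R) (mu1 : R) (X : nat -> {RV P >-> R}) :
  mu1 != 0 ->
  mutually_independent P (fun i => (X i : T -> R)) ->
  (forall i, has_normal_law P mu1 (X i)) ->
  (\int[P]_w ereal_sup [set ((nu_cusum mu1 (fun i => (X i : T -> R)) t w)%:R)%:E
                          | t in [set: nat]]
   <= \sum_(1 <= n <oo) ((n%:R * expR (- (n%:R * mu1 ^+ 2) / 8))%:E))%E.
Proof.
move=> _ indep law.
set Xf := (fun i => (X i : T -> R)) in indep *.
have mX i : measurable_fun setT (Xf i) by exact: measurable_funPT.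
pose G n w := \prod_(0 <= i < n) gg mu1 (Xf i w).
have G0 n w : 0 <= G n w by apply: prodr_ge0 => i _; exact: expR_ge0.
have GE n w : G n w = expR (- (\sum_(0 <= i < n) llr mu1 (Xf i w)) / 2).
  rewrite /G /gg -expR_sum; congr expR.
  rewrite -sumrN mulr_suml; apply: eq_bigr => i _.
  by rewrite llrE.
pose F n w := ((n%:R * G n w)%:E)%E.
have F0 n w : (0 <= F n w)%E by rewrite lee_fin mulr_ge0.
have mF n : measurable_fun setT (F n).
  apply/measurable_EFinP; apply: measurable_funM => //.
  apply: measurable_prod => i _; exact: measurableT_comp (mgg mu1) (mX i).
apply: (@le_trans _ _ (\int[P]_w (\sum_(0 <= n <oo) F n w))%E).
  apply: le_integral_nn.
    move=> w; apply: (@le_trans _ _ ((nu_cusum mu1 Xf 0 w)%:R)%:E).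
      by rewrite lee_fin.
    by apply: ereal_sup_ubound; exists 0%N.
  move=> w; apply: ge_ereal_sup => _ [t _ <-].
  case: (nu_prop mu1 Xf t w) => [->|[_ Hs]].
    by apply: nneseries_ge0 => n _ _; exact: F0.
  set k := nu_cusum mu1 Xf t w in Hs *.
  apply: (@le_trans _ _ (F k w)).
    rewrite lee_fin ler_peMr //; rewrite GE -[1]expR0 ler_expR.
    by rewrite mulNr oppr_ge0 pmulr_lle0 ?invr_gt0.
  apply: le_trans (nneseries_lim_ge k.+1 _); last by move=> n _ _; exact: F0.
  rewrite big_nat_recr //=; rewrite leeDr //.
  by apply: sume_ge0 => n _; exact: F0.
rewrite integral_nneseries //.
apply: (@le_trans _ _ (\sum_(0 <= n <oo) ((n%:R * expR (- mu1 ^+ 2 / 8) ^+ n)%:E))%E).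
  apply: lee_nneseries => n _.
    by move=> _; apply: integral_ge0 => w _; exact: F0.
  rewrite /F; under eq_integral do rewrite EFinM.
  rewrite ge0_integralZl_EFin //; last 2 first.
  - by move=> w _; rewrite lee_fin.
  - by apply/measurable_EFinP; apply: measurable_prod => i _;
      exact: measurableT_comp (mgg mu1) (mX i).
  rewrite EFinM lee_wpmul2l ?lee_fin //.
  exact: prod_bound.
rewrite le_eqVlt; apply/orP; left; apply/eqP; congr (limn _); apply/funext => k.
case: k => [|k]; first by rewrite !big_geq.
rewrite big_ltn // mul0r add0e; apply: eq_bigr => n _.
by rewrite -expRM_natl; congr (_ * expR _)%:E; ring.
Qed.
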